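(* Let $\mathcal{R}$ be a commutative, associative real algebra with unit, $A\in M^{\infty\times\infty}_0(\mathcal{R})$ and $g\in\mathcal{R}^\infty_0[t]$. Consider the differential equation $\frac{df}{dt}=Af+g$ for $f\in\mathcal{R}^\infty_0[t]$. (i) If $A-I$ is strictly upper triangular, the equation has a unique solution, and its coefficients depend $\mathcal{R}$-linearly on the coefficients of $g$. (ii) If $A$ is strictly upper triangular, a solution is uniquely determined by its degree-zero term $f_0\in\mathcal{R}^\infty_0$; in fact the solution depends $\mathcal{R}$-linearly on $f_0$ and the coefficients of $g$.
   Context: $\mathcal{R}^\infty_0$ denotes finitely supported sequences in $\mathcal{R}$ indexed by positive integers; $M^{\infty\times\infty}_0(\mathcal{R})$ denotes infinite matrices indexed by positive integers each of whose columns has finitely many nonzero entries; $\mathcal{R}^\infty_0[t]$ denotes polynomials in $t$ with coefficients in $\mathcal{R}^\infty_0$. *)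

(* Defs.v *)
From HB Require Import structures.
From mathcomp Require Import all_boot all_order all_algebra.
From mathcomp Require Import reals.
Set Implicit Arguments. Unset Strict Implicit. Unset Printing Implicit Defensive.
Import Order.TTheory GRing.Theory Num.Theory.
Local Open Scope ring_scope.

Section Defs.
Variable R : nzRingType.

Definition ventry (v : seq R) (i : nat) : R := nth 0 v i.

(* coefficient of t^k, index i *)
Definition coef (f : seq (seq R)) (k i : nat) : R := ventry (nth [::] f k) i.

(* M^{oo x oo}_0(R): every column has finitely many nonzero entries *)
Definition col_finite (A : nat -> nat -> R) : Prop :=
  forall j, exists N, forall i, (N <= i)%N -> A i j = 0.

Definition strictly_upper (A : nat -> nat -> R) : Prop :=
  forall i j, (j <= i)%N -> A i j = 0.

Definition unipotent_upper (A : nat -> nat -> R) : Prop :=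
  strictly_upper (fun i j => A i j - (i == j)%:R).

(* i-th entry of the matrix-vector product A v (a finite sum, v having finite
   support contained in [0, size v)) *)
Definition mulmv (A : nat -> nat -> R) (v : seq R) (i : nat) : R :=
  \sum_(j < size v) A i j * ventry v j.

(* f solves  df/dt = A f + g , compared coefficient of t^k by coefficient:
   (k+1) f_{k+1} = A f_k + g_k *)
Definition solves (A : nat -> nat -> R) (g f : seq (seq R)) : Prop :=
  forall k i, k.+1%:R * coef f k.+1 i = mulmv A (nth [::] f k) i + coef g k i.

Definition peq (f1 f2 : seq (seq R)) : Prop := forall k i, coef f1 k i = coef f2 k i.

End Defs.

(* Main.v *)
From Stdlib Require Import ClassicalEpsilon.
Require Import Defs.
From HB Require Import structures.
From mathcomp Require Import all_boot all_order all_algebra.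
From mathcomp Require Import reals.
From mathcomp Require Import ring zify.
Import Order.TTheory GRing.Theory Num.Theory.
Local Open Scope ring_scope.
Set Implicit Arguments. Unset Strict Implicit.

Lemma sum_widen (R : nzRingType) (n m : nat) (F : nat -> R) :
  (n <= m)%N -> (forall j, (n <= j)%N -> (j < m)%N -> F j = 0) ->
  \sum_(j < n) F j = \sum_(j < m) F j.
Proof.
move=> nm H0.
rewrite -(big_mkord xpredT F) -(big_mkord xpredT F).
rewrite (big_cat_nat (leq0n n) nm) /=.
rewrite [X in _ = _ + X]big1_seq ?addr0 // => j /andP[_].
rewrite mem_index_iota => /andP[h1 h2]; exact: H0.
Qed.

Lemma mulmv_fun (R : nzRingType) (A : nat -> nat -> R) (v : seq R) (u : nat -> R) n i :
  (forall j, ventry v j = u j) -> (forall j, (n <= j)%N -> u j = 0) ->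
  mulmv A v i = \sum_(j < n) A i j * u j.
Proof.
move=> Hv Hu; rewrite /mulmv.
rewrite (@sum_widen _ (size v) (maxn (size v) n) (fun j => A i j * ventry v j)); last 2 first.
- exact: leq_maxl.
- by move=> j h _; rewrite /ventry nth_default ?mulr0.
rewrite (@sum_widen _ n (maxn (size v) n) (fun j => A i j * u j)); last 2 first.
- exact: leq_maxr.
- by move=> j h _; rewrite Hu ?mulr0.
by apply: eq_bigr => j _; rewrite Hv.
Qed.

Definition tolist (R : nzRingType) (F : nat -> nat -> R) (Kb : nat) (Nf : nat -> nat)
  : seq (seq R) := mkseq (fun k => mkseq (F k) (Nf k)) Kb.

Lemma coef_tolist (R : nzRingType) (F : nat -> nat -> R) Kb Nf :
  (forall k i, (Kb <= k)%N -> F k i = 0) -> (forall k i, (Nf k <= i)%N -> F k i = 0) ->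
  forall k i, coef (tolist F Kb Nf) k i = F k i.
Proof.
move=> HK HN k i; rewrite /coef /ventry /tolist.
case: (ltnP k Kb) => hk.
- rewrite nth_mkseq //; case: (ltnP i (Nf k)) => hi; first by rewrite nth_mkseq.
  by rewrite nth_default ?size_mkseq // HN.
- by rewrite (nth_default [::]) ?size_mkseq // nth_nil HK.
Qed.

Lemma natmul_scale (K : realType) (R : comAlgType K) n (x : R) :
  n%:R * x = (n%:R : K) *: x.
Proof. by rewrite mulr_natl scaler_nat. Qed.

Lemma natS_cancel (K : realType) (R : comAlgType K) n (x : R) :
  n.+1%:R * x = 0 -> x = 0.
Proof.
rewrite natmul_scale => h.
have c0 : (n.+1%:R : K) != 0 by rewrite pnatr_eq0.
by rewrite -[x]scale1r -(mulVf c0) -scalerA h scaler0.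
Qed.

Lemma Ann (R : nzRingType) (A : nat -> nat -> R) : unipotent_upper A -> forall n, A n n = 1.
Proof.
move=> hA n; have := hA n n (leqnn n) => /= /eqP; rewrite eqxx subr_eq0 => /eqP //.
Qed.

Lemma Alow (R : nzRingType) (A : nat -> nat -> R) : unipotent_upper A ->
  forall i j, (j < i)%N -> A i j = 0.
Proof.
move=> hA i j hij; have := hA i j (ltnW hij) => /=.
by rewrite (gtn_eqF hij) subr0.
Qed.

Lemma uinj (R : nzRingType) (A : nat -> nat -> R) : unipotent_upper A ->
  forall n (v : nat -> R), (forall j, (n <= j)%N -> v j = 0) ->
  (forall i, \sum_(j < n) A i j * v j = 0) -> forall i, v i = 0.
Proof.
move=> hA; elim=> [|n IH] v hs hsum.
- by move=> i; apply hs.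
have vn : v n = 0.
  have := hsum n; rewrite big_ord_recr /= (Ann hA) mul1r big1 ?add0r //.
  by move=> j _; rewrite (Alow hA) ?mul0r.
apply: IH.
- by move=> j; rewrite leq_eqVlt => /orP[/eqP<-|]; [exact vn | exact: hs].
- by move=> i; have := hsum i; rewrite big_ord_recr /= vn mulr0 addr0.
Qed.

Lemma usolve (R : nzRingType) (A : nat -> nat -> R) : unipotent_upper A ->
  forall n (w : nat -> R), (forall i, (n <= i)%N -> w i = 0) ->
  exists x : nat -> R, (forall j, (n <= j)%N -> x j = 0) /\
     forall i, \sum_(j < n) A i j * x j = w i.
Proof.
move=> hA; elim=> [|n IH] w hw.
- by exists (fun _ => 0); split => // i; rewrite big_ord0 hw.
have hw' : forall i, (n <= i)%N -> w i - A i n * w n = 0.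
  move=> i; rewrite leq_eqVlt => /orP[/eqP<-|hi]; first by rewrite (Ann hA) mul1r subrr.
  by rewrite (Alow hA hi) mul0r subr0 hw.
have [x' [hx' hsum']] := IH _ hw'.
exists (fun j => if j == n then w n else x' j); split.
- by move=> j hj; rewrite (gtn_eqF hj) hx' // ltnW.
- move=> i; rewrite big_ord_recr /= eqxx.
  rewrite (eq_bigr (fun j : 'I_n => A i j * x' j)); last first.
    by move=> j _; rewrite (ltn_eqF (ltn_ord j)).
  by rewrite hsum' subrK.
Qed.

Definition gb (R : nzRingType) (g : seq (seq R)) : nat :=
  foldr (fun s m => maxn (size s) m) 0%N g.

Lemma gb_spec (R : nzRingType) (g : seq (seq R)) k : (size (nth [::] g k) <= gb g)%N.
Proof.
elim: g k => [|s g IH] [|k] //=; first exact: leq_maxl.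
exact: leq_trans (IH k) (leq_maxr _ _).
Qed.

Lemma coef_gb (R : nzRingType) (g : seq (seq R)) k i : (gb g <= i)%N -> coef g k i = 0.
Proof.
move=> h; rewrite /coef /ventry nth_default //; exact: leq_trans (gb_spec g k) h.
Qed.

Lemma coef_size (R : nzRingType) (g : seq (seq R)) k i : (size g <= k)%N -> coef g k i = 0.
Proof. by move=> h; rewrite /coef nth_default // /ventry nth_nil. Qed.

Lemma coef_nsz (R : nzRingType) (f : seq (seq R)) k j :
  (size (nth [::] f k) <= j)%N -> coef f k j = 0.
Proof. by move=> h; rewrite /coef /ventry nth_default. Qed.

Lemma coef_nsz2 (R : nzRingType) (f1 f2 : seq (seq R)) k j :
  (maxn (size (nth [::] f1 k)) (size (nth [::] f2 k)) <= j)%N ->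
  coef f1 k j = 0 /\ coef f2 k j = 0.
Proof.
move=> h; split; apply: coef_nsz.
- exact: leq_trans (leq_maxl _ _) h.
- exact: leq_trans (leq_maxr _ _) h.
Qed.

Lemma exist1 (K : realType) (R : comAlgType K) (A : nat -> nat -> R) :
  unipotent_upper A -> forall g : seq (seq R), exists f, solves A g f.
Proof.
move=> hA g.
set D := size g. set Nb := gb g.
have key : forall m, (m <= D)%N -> exists F : nat -> nat -> R,
   (forall k i, (D <= k)%N -> F k i = 0) /\ (forall k i, (Nb <= i)%N -> F k i = 0) /\
   forall k i, (D - m <= k)%N ->
     k.+1%:R * F k.+1 i = \sum_(j < Nb) A i j * F k j + coef g k i.
  elim=> [|m IH] hm.
  - exists (fun _ _ => 0); split=> //; split=> // k i; rewrite subn0 => hk.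
    by rewrite mulr0 big1 ?add0r ?coef_size // => j _; rewrite mulr0.
  have [F [hF1 [hF2 hF3]]] := IH (ltnW hm).
  set k0 := (D - m.+1)%N.
  have hw : forall i, (Nb <= i)%N -> k0.+1%:R * F k0.+1 i - coef g k0 i = 0.
    by move=> i hi; rewrite hF2 // coef_gb // mulr0 subr0.
  have [x [hx hxs]] := usolve hA hw.
  exists (fun k => if k == k0 then x else F k); split; [|split].
  - move=> k i hk; case: eqP => [ek|_]; last exact: hF1.
    exfalso; rewrite /k0 in ek; lia.
  - by move=> k i hi; case: eqP => _; [exact: hx | exact: hF2].
  - move=> k i hk /=.
    have -> : (k.+1 == k0) = false by apply/eqP; rewrite /k0; lia.
    case: eqP => [ek|nk].
    + by rewrite ek hxs subrK.
    + by rewrite hF3 //; rewrite /k0 in nk; lia.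
have [F [h1 [h2 h3]]] := key D (leqnn D).
exists (tolist F D (fun _ => Nb)) => k i.
rewrite !coef_tolist //.
rewrite (@mulmv_fun _ A _ (F k) Nb); last 2 first.
- by move=> j; exact: (coef_tolist h1 h2 k j).
- by move=> j hj; exact: h2.
by rewrite h3 // subnn.
Qed.

Fixpoint Fr (K : realType) (R : comAlgType K) (A : nat -> nat -> R) (f0 : seq R)
  (g : seq (seq R)) (Nb : nat) (k : nat) : nat -> R :=
  match k with
  | 0 => ventry f0
  | k'.+1 => fun i => (k'.+1%:R : K)^-1 *:
       (\sum_(j < Nb) A i j * Fr A f0 g Nb k' j + coef g k' i)
  end.

Lemma exist2 (K : realType) (R : comAlgType K) (A : nat -> nat -> R) :
  strictly_upper A -> forall (f0 : seq R) (g : seq (seq R)),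
  exists f, solves A g f /\ forall i, coef f 0 i = ventry f0 i.
Proof.
move=> hA f0 g.
set D := size g. set Nb := maxn (size f0) (gb g).
set F := Fr A f0 g Nb.
have hsupp : forall k i, (Nb <= i)%N -> F k i = 0.
  elim=> [|k IH] i hi; rewrite /F /= -/F.
  - by rewrite /ventry nth_default // (leq_trans (leq_maxl _ _) hi).
  - rewrite big1 ?add0r ?coef_gb ?scaler0 //; first exact: leq_trans (leq_maxr _ _) hi.
    move=> j _; rewrite hA ?mul0r //; apply: ltnW; exact: leq_trans (ltn_ord j) hi.
have hfin : forall m i, (Nb <= i + m)%N -> forall k, (D <= k)%N -> F (k + m)%N i = 0.
  elim=> [|m IH] i hi k hk.
  - by rewrite addn0 hsupp // -(addn0 i).
  rewrite addnS /F /= -/F coef_size ?(leq_trans hk (leq_addr _ _)) // addr0.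
  rewrite big1 ?scaler0 // => j _.
  case: (leqP (nat_of_ord j) i) => hj; first by rewrite hA ?mul0r.
  rewrite IH ?mulr0 //; lia.
have hK : forall k i, (D + Nb <= k)%N -> F k i = 0.
  move=> k i hk; have hk' : (Nb <= k)%N by lia.
  rewrite -(subnK hk') hfin //; first by rewrite leq_addl.
  lia.
exists (tolist F (D + Nb) (fun _ => Nb)); split.
- move=> k i; rewrite !coef_tolist //.
  rewrite (@mulmv_fun _ A _ (F k) Nb); last 2 first.
  + by move=> j; exact: (coef_tolist hK hsupp k j).
  + by move=> j hj; exact: hsupp.
  have c0 : (k.+1%:R : K) != 0 by rewrite pnatr_eq0.
  by rewrite /= natmul_scale scalerA mulfV // scale1r.
- by move=> i; rewrite coef_tolist.
Qed.

Lemma diff_eq (K : realType) (R : comAlgType K) (A : nat -> nat -> R) g f1 f2 :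
  solves A g f1 -> solves A g f2 -> forall k i,
  k.+1%:R * (coef f1 k.+1 i - coef f2 k.+1 i) =
  \sum_(j < maxn (size (nth [::] f1 k)) (size (nth [::] f2 k)))
     A i j * (coef f1 k j - coef f2 k j).
Proof.
move=> h1 h2 k i.
rewrite mulrBr h1 h2.
rewrite (@mulmv_fun _ A _ (coef f1 k) (maxn (size (nth [::] f1 k)) (size (nth [::] f2 k)))) //; last first.
  by move=> j hj; rewrite /coef /ventry nth_default // (leq_trans (leq_maxl _ _) hj).
rewrite (@mulmv_fun _ A _ (coef f2 k) (maxn (size (nth [::] f1 k)) (size (nth [::] f2 k)))) //; last first.
  by move=> j hj; rewrite /coef /ventry nth_default // (leq_trans (leq_maxr _ _) hj).
rewrite opprD addrACA subrr addr0 -sumrB; apply: eq_bigr => j _; by rewrite mulrBr.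
Qed.

Lemma uniq2 (K : realType) (R : comAlgType K) (A : nat -> nat -> R) :
  forall g f1 f2 : seq (seq R), solves A g f1 -> solves A g f2 ->
        (forall i, coef f1 0 i = coef f2 0 i) -> peq f1 f2.
Proof.
move=> g f1 f2 h1 h2 h0 k; elim: k => [|k IH] i; first exact: h0.
apply/eqP; rewrite -subr_eq0; apply/eqP; apply: (@natS_cancel K R k).
rewrite (diff_eq h1 h2) big1 // => j _; by rewrite IH subrr mulr0.
Qed.

Lemma uniq1 (K : realType) (R : comAlgType K) (A : nat -> nat -> R) :
  unipotent_upper A ->
  forall g f1 f2 : seq (seq R), solves A g f1 -> solves A g f2 -> peq f1 f2.
Proof.
move=> hA g f1 f2 h1 h2.
set Kb := maxn (size f1) (size f2).
have claim : forall m k, (Kb - m <= k)%N -> forall i, coef f1 k i - coef f2 k i = 0.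
  elim=> [|m IH] k hk i.
  - rewrite subn0 in hk.
    have hs1 : (size f1 <= k)%N by exact: leq_trans (leq_maxl _ _) hk.
    have hs2 : (size f2 <= k)%N by exact: leq_trans (leq_maxr _ _) hk.
    by rewrite (@coef_size _ _ _ _ hs1) (@coef_size _ _ _ _ hs2) subrr.
  have hk1 : (Kb - m <= k.+1)%N by lia.
  apply: (@uinj _ A hA (maxn (size (nth [::] f1 k)) (size (nth [::] f2 k)))
            (fun j => coef f1 k j - coef f2 k j)).
  - by move=> j /coef_nsz2 [-> ->]; rewrite subrr.
  - by move=> i'; rewrite -(diff_eq h1 h2) IH // mulr0.
move=> k i; apply/eqP; rewrite -subr_eq0; apply/eqP; apply: (claim Kb).
by rewrite subnn.
Qed.

Definition comb (R : nzRingType) (a b : R) (f1 f2 : seq (seq R)) :=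
  tolist (fun k i => a * coef f1 k i + b * coef f2 k i) (maxn (size f1) (size f2))
    (fun k => maxn (size (nth [::] f1 k)) (size (nth [::] f2 k))).

Lemma coef_comb (R : nzRingType) (a b : R) f1 f2 k i :
  coef (comb a b f1 f2) k i = a * coef f1 k i + b * coef f2 k i.
Proof.
apply: coef_tolist => k' i' h.
- have hs1 : (size f1 <= k')%N by exact: leq_trans (leq_maxl _ _) h.
  have hs2 : (size f2 <= k')%N by exact: leq_trans (leq_maxr _ _) h.
  by rewrite (@coef_size _ _ _ _ hs1) (@coef_size _ _ _ _ hs2) !mulr0 addr0.
- by move: h => /coef_nsz2 [-> ->]; rewrite !mulr0 addr0.
Qed.

Lemma comb_solves (R : comNzRingType) (A : nat -> nat -> R) (a b : R) g1 g2 g3 f1 f2 :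
  solves A g1 f1 -> solves A g2 f2 ->
  (forall k i, coef g3 k i = a * coef g1 k i + b * coef g2 k i) ->
  solves A g3 (comb a b f1 f2).
Proof.
move=> h1 h2 h3 k i.
set M := maxn (size (nth [::] f1 k)) (size (nth [::] f2 k)).
rewrite !coef_comb h3.
rewrite (@mulmv_fun _ A _ (fun j => a * coef f1 k j + b * coef f2 k j) M); last 2 first.
- by move=> j; exact: coef_comb.
- by move=> j /coef_nsz2 [-> ->]; rewrite !mulr0 addr0.
rewrite mulrDr mulrCA [_ * (b * _)]mulrCA h1 h2.
rewrite (@mulmv_fun _ A _ (coef f1 k) M) //; last first.
  by move=> j hj; rewrite /coef /ventry nth_default // (leq_trans (leq_maxl _ _) hj).
rewrite (@mulmv_fun _ A _ (coef f2 k) M) //; last first.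
  by move=> j hj; rewrite /coef /ventry nth_default // (leq_trans (leq_maxr _ _) hj).
rewrite [X in _ = X + _](eq_bigr (fun j : 'I_M => a * (A i j * coef f1 k j) + b * (A i j * coef f2 k j)));
  last by move=> j _; ring.
rewrite big_split /= -!mulr_sumr.
ring.
Qed.

Unset Implicit Arguments. Set Strict Implicit.

Theorem lemma6p2 (K : realType) (R : comAlgType K)
    (A : nat -> nat -> R) (hA : col_finite A) :
  (* (i) *)
  (unipotent_upper A ->
     (forall g : seq (seq R), exists f, solves A g f) /\
     (forall g f1 f2 : seq (seq R), solves A g f1 -> solves A g f2 -> peq f1 f2) /\
     (exists sol : seq (seq R) -> seq (seq R),
        (forall g, solves A g (sol g)) /\
        (forall (a b : R) (g1 g2 g3 : seq (seq R)),
           (forall k i, coef g3 k i = a * coef g1 k i + b * coef g2 k i) ->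
           forall k i, coef (sol g3) k i = a * coef (sol g1) k i + b * coef (sol g2) k i)))
  /\
  (* (ii) *)
  (strictly_upper A ->
     (forall g f1 f2 : seq (seq R), solves A g f1 -> solves A g f2 ->
        (forall i, coef f1 0 i = coef f2 0 i) -> peq f1 f2) /\
     (exists sol : seq R -> seq (seq R) -> seq (seq R),
        (forall f0 g, solves A g (sol f0 g) /\ forall i, coef (sol f0 g) 0 i = ventry f0 i) /\
        (forall (a b : R) (u1 u2 u3 : seq R) (g1 g2 g3 : seq (seq R)),
           (forall i, ventry u3 i = a * ventry u1 i + b * ventry u2 i) ->
           (forall k i, coef g3 k i = a * coef g1 k i + b * coef g2 k i) ->
           forall k i, coef (sol u3 g3) k i
                       = a * coef (sol u1 g1) k i + b * coef (sol u2 g2) k i))).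
Proof.
split.
- move=> hU.
  have ex := exist1 hU. have un := uniq1 hU.
  split; first exact: ex. split; first exact: un.
  have [sol hsol] : exists sol : seq (seq R) -> seq (seq R), forall g, solves A g (sol g).
    exists (fun g => proj1_sig (constructive_indefinite_description _ (ex g))) => g.
    exact: (proj2_sig (constructive_indefinite_description _ (ex g))).
  exists sol; split => // a b g1 g2 g3 hg k i.
  rewrite -coef_comb; apply: (un g3) => //.
  exact: comb_solves (hsol g1) (hsol g2) hg.
- move=> hS.
  have ex := exist2 hS. have un := @uniq2 K R A.
  split; first exact: un.
  have [sol hsol] : exists sol : seq R -> seq (seq R) -> seq (seq R),
      forall f0 g, solves A g (sol f0 g) /\ forall i, coef (sol f0 g) 0 i = ventry f0 i.
    exists (fun f0 g => proj1_sig (constructive_indefinite_description _ (ex f0 g))) => f0 g.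
    exact: (proj2_sig (constructive_indefinite_description _ (ex f0 g))).
  exists sol; split => // a b u1 u2 u3 g1 g2 g3 hu hg k i.
  have [s1 z1] := hsol u1 g1. have [s2 z2] := hsol u2 g2. have [s3 z3] := hsol u3 g3.
  rewrite -coef_comb; apply: (un g3) => //.
  + exact: comb_solves s1 s2 hg.
  + by move=> i'; rewrite z3 coef_comb z1 z2 hu.
Qed.
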